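(* Let $M_\sharp\in\mathbb{R}^{d_1\times d_2}$ have rank $r$, let $M_\sharp=U\Lambda V^\top$ be a compact singular value decomposition ($U\in\mathbb{R}^{d_1\times r}$, $V\in\mathbb{R}^{d_2\times r}$ with orthonormal columns, $\Lambda$ diagonal $r\times r$ with positive entries), and set $X_\sharp=U\sqrt\Lambda$, $Y_\sharp=\sqrt\Lambda V^\top$. Let $$\mathcal{D}^*(M_\sharp)=\{(X_\sharp A,A^{-1}Y_\sharp):A\in GL(r)\}.$$ Fix $\nu>0$. Then for all $X\in\mathbb{R}^{d_1\times r}$, $Y\in\mathbb{R}^{r\times d_2}$ satisfying $$\max\{\|X-X_\sharp\|_F,\|Y-Y_\sharp\|_F\}\le\nu\sqrt{\sigma_r(M_\sharp)},\qquad \mathrm{dist}\big((X,Y),\mathcal{D}^*(M_\sharp)\big)\le\frac{\sqrt{\sigma_r(M_\sharp)}}{1+2(1+\sqrt2)\nu},$$ we have $$\|XY-M_\sharp\|_F\ge\frac{\sqrt{\sigma_r(M_\sharp)}}{2+4(1+\sqrt2)\nu}\cdot\mathrm{dist}\big((X,Y),\mathcal{D}^*(M_\sharp)\big).$$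
   Context: $\sigma_r(M)$ is the $r$-th largest singular value. $GL(r)$ is the set of invertible $r\times r$ matrices. The distance is $\mathrm{dist}((X,Y),\mathcal{D}^*(M_\sharp))=\inf_{A\in GL(r)}\sqrt{\|X-X_\sharp A\|_F^2+\|Y-A^{-1}Y_\sharp\|_F^2}$. *)

(* Defs.v *)
From HB Require Import structures.
From mathcomp Require Import all_boot all_order all_algebra.
Set Implicit Arguments. Unset Strict Implicit. Unset Printing Implicit Defensive.
Import Order.TTheory GRing.Theory Num.Theory.
Local Open Scope ring_scope.

Definition frob2 (R : rcfType) (m n : nat) (A : 'M[R]_(m, n)) : R :=
  \sum_(i < m) \sum_(j < n) A i j ^+ 2.
Definition frob (R : rcfType) (m n : nat) (A : 'M[R]_(m, n)) : R :=
  Num.sqrt (frob2 A).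

Definition is_compact_svd (R : rcfType) (d1 d2 r : nat) (M : 'M[R]_(d1, d2))
    (U : 'M[R]_(d1, r)) (lam : 'rV[R]_r) (V : 'M[R]_(d2, r)) : Prop :=
  [/\ U^T *m U = 1%:M, V^T *m V = 1%:M, (forall i, 0 < lam 0 i)
    & M = U *m diag_mx lam *m V^T].

Definition sqrt_diag (R : rcfType) (r : nat) (lam : 'rV[R]_r) : 'M[R]_r :=
  diag_mx (map_mx Num.sqrt lam).

Definition Xsharp (R : rcfType) (d1 r : nat) (U : 'M[R]_(d1, r)) (lam : 'rV[R]_r)
  : 'M[R]_(d1, r) := U *m sqrt_diag lam.
Definition Ysharp (R : rcfType) (d2 r : nat) (V : 'M[R]_(d2, r)) (lam : 'rV[R]_r)
  : 'M[R]_(r, d2) := sqrt_diag lam *m V^T.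

(* sigma_r(M) for M with compact SVD of rank r: the r-th largest singular
   value, i.e. the smallest diagonal entry of Lambda. *)
Definition is_sigma_r (R : rcfType) (r : nat) (lam : 'rV[R]_r) (s : R) : Prop :=
  (exists i, lam 0 i = s) /\ (forall i, s <= lam 0 i).

(* The quantity whose infimum over A in GL(r) defines the distance to D*(M). *)
Definition dist_term (R : rcfType) (d1 d2 r : nat) (Xs : 'M[R]_(d1, r))
    (Ys : 'M[R]_(r, d2)) (X : 'M[R]_(d1, r)) (Y : 'M[R]_(r, d2)) (A : 'M[R]_r) : R :=
  Num.sqrt (frob2 (X - Xs *m A) + frob2 (Y - invmx A *m Ys)).

Definition is_dist (R : rcfType) (d1 d2 r : nat) (Xs : 'M[R]_(d1, r))
    (Ys : 'M[R]_(r, d2)) (X : 'M[R]_(d1, r)) (Y : 'M[R]_(r, d2)) (d : R) : Prop :=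
  (forall A : 'M[R]_r, A \in unitmx -> d <= dist_term Xs Ys X Y A) /\
  (forall e : R, (forall A : 'M[R]_r, A \in unitmx -> e <= dist_term Xs Ys X Y A) -> e <= d).

(* Main.v *)
Require Import Defs.
From HB Require Import structures.
From mathcomp Require Import all_boot all_order all_algebra.
From mathcomp Require Import ring lra.
From Stdlib Require Import Classical.
Import Order.TTheory GRing.Theory Num.Theory.
Local Open Scope ring_scope.

Set Implicit Arguments. Unset Strict Implicit. Unset Printing Implicit Defensive.
Section Aux.
Variable R : rcfType.

Lemma CS (I : finType) (f g : I -> R) :
  (\sum_i f i * g i) ^+ 2 <= (\sum_i f i ^+ 2) * (\sum_i g i ^+ 2).
Proof.
have H : forall i j, (f i * g j - f j * g i) ^+ 2 =
     (f i ^+ 2 * g j ^+ 2) + (f j ^+ 2 * g i ^+ 2) - 2 * ((f i * g i) * (f j * g j)).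
  by move=> i j; ring.
have E : \sum_i \sum_j (f i * g j - f j * g i) ^+ 2 =
   2 * ((\sum_i f i ^+ 2) * (\sum_i g i ^+ 2) - (\sum_i f i * g i) ^+ 2).
  rewrite expr2 !big_distrlr /=.
  under eq_bigr do under eq_bigr do rewrite H.
  rewrite (exchange_big _ _ _ _ _ (fun i j => f i ^+ 2 * g j ^+ 2)).
  under eq_bigr do rewrite sumrB big_split /=.
  rewrite sumrB big_split /=.
  have e3 : \sum_i \sum_j 2 * (f i * g i * (f j * g j)) = 2 * \sum_i \sum_j (f i * g i * (f j * g j)).
    by rewrite mulr_sumr; apply: eq_bigr => i _; rewrite mulr_sumr.
  rewrite e3 (exchange_big _ _ _ _ _ (fun i j => f i ^+ 2 * g j ^+ 2)) /=.
  ring.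
have : 0 <= \sum_i \sum_j (f i * g j - f j * g i) ^+ 2.
  by apply: sumr_ge0 => i _; apply: sumr_ge0 => j _; apply: sqr_ge0.
rewrite E; lra.
Qed.

Definition ip m n (A B : 'M[R]_(m, n)) := \sum_i \sum_j A i j * B i j.

Lemma frob2_ge0 m n (A : 'M[R]_(m, n)) : 0 <= frob2 A.
Proof. by apply: sumr_ge0 => i _; apply: sumr_ge0 => j _; apply: sqr_ge0. Qed.

Lemma frob_ge0 m n (A : 'M[R]_(m, n)) : 0 <= frob A.
Proof. exact: sqrtr_ge0. Qed.

Lemma frob2E m n (A : 'M[R]_(m, n)) : frob2 A = frob A ^+ 2.
Proof. by rewrite /frob sqr_sqrtr // frob2_ge0. Qed.

Lemma frob2D m n (A B : 'M[R]_(m, n)) :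
  frob2 (A + B) = frob2 A + frob2 B + 2 * ip A B.
Proof.
rewrite /frob2 /ip mulr_sumr -!big_split /=; apply: eq_bigr => i _.
rewrite mulr_sumr -!big_split /=; apply: eq_bigr => j _; rewrite mxE; ring.
Qed.

Lemma ip_tr m n (A B : 'M[R]_(m, n)) : ip A B = \tr (A *m B^T).
Proof.
rewrite /ip /mxtrace; apply: eq_bigr => i _; rewrite mxE.
by apply: eq_bigr => j _; rewrite mxE.
Qed.

Lemma ip_trT m n (A B : 'M[R]_(m, n)) : ip A B = \tr (A^T *m B).
Proof.
rewrite /ip /mxtrace exchange_big; apply: eq_bigr => j _; rewrite mxE.
by apply: eq_bigr => i _; rewrite mxE.
Qed.

Lemma ip_CS m n (A B : 'M[R]_(m, n)) : ip A B ^+ 2 <= frob2 A * frob2 B.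
Proof.
rewrite /ip /frob2 !(pair_bigA _ (fun i j => _)) /=.
exact: (CS (fun p : 'I_m * 'I_n => A p.1 p.2) (fun p => B p.1 p.2)).
Qed.

Lemma ip_le m n (A B : 'M[R]_(m, n)) : ip A B <= frob A * frob B.
Proof.
have h := ip_CS A B; rewrite !frob2E -exprMn in h.
have h0 : 0 <= frob A * frob B by rewrite mulr_ge0 // frob_ge0.
nra.
Qed.

Lemma frob_sqr_le m n (A : 'M[R]_(m, n)) x : 0 <= x -> frob2 A <= x ^+ 2 -> frob A <= x.
Proof. by move=> x0 h; rewrite /frob -(ger0_norm x0) -sqrtr_sqr ler_wsqrtr. Qed.

Lemma frob_le_sqr m n (A : 'M[R]_(m, n)) x : frob A <= x -> frob2 A <= x ^+ 2.
Proof. move=> h; rewrite frob2E; have := frob_ge0 A; nra. Qed.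

Lemma frobD m n (A B : 'M[R]_(m, n)) : frob (A + B) <= frob A + frob B.
Proof.
apply: frob_sqr_le; first by rewrite addr_ge0 // frob_ge0.
rewrite frob2D !frob2E; have := ip_le A B; nra.
Qed.

Lemma frob2N m n (A : 'M[R]_(m, n)) : frob2 (- A) = frob2 A.
Proof. by apply: eq_bigr => i _; apply: eq_bigr => j _; rewrite mxE sqrrN. Qed.

Lemma frobN m n (A : 'M[R]_(m, n)) : frob (- A) = frob A.
Proof. by rewrite /frob frob2N. Qed.

Lemma frobB m n (A B : 'M[R]_(m, n)) : frob (A - B) <= frob A + frob B.
Proof. by rewrite -(frobN B) frobD. Qed.

Lemma frob2_trmx m n (A : 'M[R]_(m, n)) : frob2 A^T = frob2 A.
Proof.
rewrite /frob2 exchange_big; apply: eq_bigr => i _; apply: eq_bigr => j _.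
by rewrite mxE.
Qed.

Lemma frob_trmx m n (A : 'M[R]_(m, n)) : frob A^T = frob A.
Proof. by rewrite /frob frob2_trmx. Qed.

Lemma frob2_mul m n p (A : 'M[R]_(m, n)) (B : 'M[R]_(n, p)) :
  frob2 (A *m B) <= frob2 A * frob2 B.
Proof.
rewrite /frob2 big_distrl /=; apply: ler_sum => i _.
rewrite (exchange_big _ _ _ _ _ (fun k j => B k j ^+ 2)) /= big_distrr /=.
apply: ler_sum => j _; rewrite mxE.
exact: (CS (fun k => A i k) (fun k => B k j)).
Qed.

Lemma frob_mul m n p (A : 'M[R]_(m, n)) (B : 'M[R]_(n, p)) :
  frob (A *m B) <= frob A * frob B.
Proof.
apply: frob_sqr_le; first by rewrite mulr_ge0 // frob_ge0.
by rewrite exprMn -!frob2E frob2_mul.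
Qed.

Lemma frob2_orth m n (A B : 'M[R]_(m, n)) : A *m B^T = 0 ->
  frob2 (A + B) = frob2 A + frob2 B.
Proof. by move=> h; rewrite frob2D ip_tr h mxtrace0 mulr0 addr0. Qed.

Lemma frob2_orthT m n (A B : 'M[R]_(m, n)) : A^T *m B = 0 ->
  frob2 (A + B) = frob2 A + frob2 B.
Proof. by move=> h; rewrite frob2D ip_trT h mxtrace0 mulr0 addr0. Qed.

Lemma frob2_tr m n (A : 'M[R]_(m, n)) : frob2 A = \tr (A *m A^T).
Proof.
rewrite -ip_tr /ip /frob2; apply: eq_bigr => i _; apply: eq_bigr => j _.
by rewrite expr2.
Qed.

Lemma frob2_mulU m n k (U : 'M[R]_(m, n)) (Z : 'M[R]_(n, k)) :
  U^T *m U = 1%:M -> frob2 (U *m Z) = frob2 Z.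
Proof.
move=> hU; rewrite !frob2_tr trmx_mul !mulmxA mxtrace_mulC !mulmxA hU mul1mx.
by rewrite mxtrace_mulC.
Qed.

Lemma frob2_mulVt m n k (V : 'M[R]_(m, n)) (Z : 'M[R]_(k, n)) :
  V^T *m V = 1%:M -> frob2 (Z *m V^T) = frob2 Z.
Proof.
by move=> hV; rewrite -frob2_trmx trmx_mul trmxK frob2_mulU // frob2_trmx.
Qed.

Lemma frob2_projU m n k (U : 'M[R]_(m, n)) (Z : 'M[R]_(m, k)) :
  U^T *m U = 1%:M -> frob2 (U^T *m Z) <= frob2 Z.
Proof.
move=> hU.
have -> : frob2 Z = frob2 (U *m (U^T *m Z) + (Z - U *m (U^T *m Z))).
  by rewrite addrC subrK.
rewrite frob2_orthT.
  by rewrite (frob2_mulU (U^T *m Z) hU) -[X in X <= _]addr0 lerD2l frob2_ge0.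
rewrite trmx_mul mulmxBr -!mulmxA (mulmxA U^T U) hU mul1mx.
by rewrite trmx_mul mulmxA -mulmxA subrr.
Qed.

Lemma frob2_projV m n k (V : 'M[R]_(m, n)) (Z : 'M[R]_(k, m)) :
  V^T *m V = 1%:M -> frob2 (Z *m V) <= frob2 Z.
Proof.
by move=> hV; rewrite -frob2_trmx trmx_mul -(frob2_trmx Z) frob2_projU.
Qed.


Lemma frob2_diag n k (c : 'rV[R]_n) (B : 'M[R]_(n, k)) :
  frob2 (diag_mx c *m B) = \sum_i \sum_j c 0 i ^+ 2 * B i j ^+ 2.
Proof.
rewrite mul_diag_mx /frob2; apply: eq_bigr => i _; apply: eq_bigr => j _.
by rewrite mxE exprMn.
Qed.

Lemma frob_diag_ge n k (c : 'rV[R]_n) (B : 'M[R]_(n, k)) a :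
  0 <= a -> (forall i, a ^+ 2 <= c 0 i ^+ 2) -> a * frob B <= frob (diag_mx c *m B).
Proof.
move=> a0 h; rewrite /frob -(ger0_norm a0) -sqrtr_sqr -sqrtrM ?sqr_ge0 //.
apply: ler_wsqrtr; rewrite frob2_diag /frob2 mulr_sumr; apply: ler_sum => i _.
rewrite mulr_sumr; apply: ler_sum => j _; apply: ler_wpM2r; [exact: sqr_ge0|exact: h].
Qed.

Lemma frob_diag_le n k (c : 'rV[R]_n) (B : 'M[R]_(n, k)) b :
  0 <= b -> (forall i, c 0 i ^+ 2 <= b ^+ 2) -> frob (diag_mx c *m B) <= b * frob B.
Proof.
move=> b0 h; rewrite /frob -(ger0_norm b0) -sqrtr_sqr -sqrtrM ?sqr_ge0 //.
apply: ler_wsqrtr; rewrite frob2_diag /frob2 mulr_sumr; apply: ler_sum => i _.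
rewrite mulr_sumr; apply: ler_sum => j _; apply: ler_wpM2r; [exact: sqr_ge0|exact: h].
Qed.

Lemma routeA n k (c : 'rV[R]_n) (Z : 'M[R]_n) (B : 'M[R]_(n, k)) a :
  0 <= a -> (forall i, a ^+ 2 <= c 0 i ^+ 2) ->
  (a - frob (Z - diag_mx c)) * frob B <= frob (Z *m B).
Proof.
move=> a0 h.
have h1 := frob_diag_ge B a0 h.
have e : diag_mx c *m B = Z *m B + (diag_mx c - Z) *m B by rewrite mulmxBl addrC subrK.
have h2 := frobD (Z *m B) ((diag_mx c - Z) *m B).
have h3 := frob_mul (diag_mx c - Z) B.
have h3' : frob (diag_mx c - Z) = frob (Z - diag_mx c) by rewrite -opprB frobN.
rewrite -e in h2; rewrite h3' in h3.
lra.
Qed.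

Lemma routeB n k (c ci : 'rV[R]_n) (P Q Z : 'M[R]_n) (B : 'M[R]_(n, k)) a g t :
  0 < a -> (forall i, ci 0 i ^+ 2 <= a^-1 ^+ 2) ->
  diag_mx c *m diag_mx ci = 1%:M ->
  Q *m (diag_mx ci *m diag_mx ci) *m P = 1%:M ->
  frob (Q - diag_mx c) <= g -> frob (Z - P) <= t ->
  a ^+ 2 * frob B <= (a + g) * (frob (Z *m B) + t * frob B).
Proof.
move=> a0 hci hS hQP hg ht.
set W := P *m B.
have eB : B = diag_mx ci *m W + (Q - diag_mx c) *m (diag_mx ci *m (diag_mx ci *m W)).
  rewrite mulmxBl !mulmxA hS mul1mx addrC subrK /W.
  by rewrite -!mulmxA (mulmxA (diag_mx ci)) (mulmxA Q) (mulmxA _ P) hQP mul1mx.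
have ai : 0 <= a^-1 by rewrite invr_ge0 ltW.
have h1 := frob_diag_le W ai hci.
have h2 := frob_diag_le (diag_mx ci *m W) ai hci.
have h3 := frob_mul (Q - diag_mx c) (diag_mx ci *m (diag_mx ci *m W)).
have h4 := frobD (diag_mx ci *m W) ((Q - diag_mx c) *m (diag_mx ci *m (diag_mx ci *m W))).
rewrite -eB in h4.
have hW : frob W <= frob (Z *m B) + t * frob B.
  have e : W = Z *m B - (Z - P) *m B by rewrite mulmxBl opprB addrC subrK.
  have := frobB (Z *m B) ((Z - P) *m B); rewrite -e => h5.
  have := frob_mul (Z - P) B; have := frob_ge0 B; nra.
have g0 : 0 <= g by apply: le_trans hg; exact: frob_ge0.
have hB : a ^+ 2 * frob B <= (a + g) * frob W.
  have f0 := frob_ge0 W; have f1 := frob_ge0 (diag_mx ci *m W).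
  have f2 := frob_ge0 (diag_mx ci *m (diag_mx ci *m W)).
  have fQ := frob_ge0 (Q - diag_mx c).
  have aa : a * a^-1 = 1 by rewrite mulfV // gt_eqF.
  have h6 : frob B <= a^-1 * frob W + g * (a^-1 * (a^-1 * frob W)).
    have p1 : frob (Q - diag_mx c) * frob (diag_mx ci *m (diag_mx ci *m W)) <=
       g * frob (diag_mx ci *m (diag_mx ci *m W)) by apply: ler_wpM2r.
    have p2 : frob (diag_mx ci *m (diag_mx ci *m W)) <= a^-1 * (a^-1 * frob W).
      by apply: (le_trans h2); apply: ler_wpM2l.
    have p3 := ler_wpM2l g0 p2.
    lra.
  have : a ^+ 2 * frob B <= a ^+ 2 * (a^-1 * frob W + g * (a^-1 * (a^-1 * frob W))).
    by rewrite ler_wpM2l // sqr_ge0.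
  have -> : a ^+ 2 * (a^-1 * frob W + g * (a^-1 * (a^-1 * frob W))) = (a + g) * frob W.
    rewrite expr2; have -> : a * a * (a^-1 * frob W + g * (a^-1 * (a^-1 * frob W))) =
      (a * a^-1) * a * frob W + g * ((a * a^-1) * (a * a^-1) * frob W) by ring.
    rewrite aa; ring.
  by [].
have := ler_wpM2l (addr_ge0 (ltW a0) g0) hW; lra.
Qed.


Lemma Kineq (a nu t w : R) : 0 < a -> 3/4 < nu -> 0 <= t -> 1 + 4 * nu <= w ->
  t <= 5 * a / (4 * w) -> (a / (2 * w) + t) * (a + nu * a + t) <= a ^+ 2.
Proof.
move=> a0 hn t0 hw ht.
have w0 : 0 < w by lra.
set u := a / w.
have hu : a = u * w by rewrite /u mulfVK // gt_eqF.
have u0 : 0 < u by rewrite /u divr_gt0.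
have e1 : a / (2 * w) = u / 2 by rewrite /u invfM; field; rewrite gt_eqF.
have e2 : 5 * a / (4 * w) = 5 / 4 * u by rewrite /u invfM; field; rewrite gt_eqF.
rewrite e1; rewrite e2 in ht; rewrite hu.
have h1 : u / 2 + t <= 7 / 4 * u by lra.
have h2 : u * w + nu * (u * w) + t <= u * w + nu * (u * w) + 5/4 * u by lra.
have h3 : 0 <= u / 2 + t by lra.
have h4 : (u / 2 + t) * (u * w + nu * (u * w) + t) <= 7/4 * u * (u * w + nu * (u * w) + 5/4 * u).
  apply: (le_trans (ler_wpM2l h3 h2)); apply: ler_wpM2r => //; nra.
apply: (le_trans h4).
have : 7 * (1 + nu + 5/16) <= 4 * w by lra.
have : 7/4 * u * (u * w + nu * (u * w) + 5 / 4 * u) <= 7/4 * u * (u * w + nu * (u * w) + 5/16 * u * w).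
  apply: ler_wpM2l; first by lra. nra.
nra.
Qed.

Lemma frob_eq0 m n (B : 'M[R]_(m, n)) : frob B = 0 -> B = 0.
Proof.
move=> h; have h2 : frob2 B = 0.
  by rewrite frob2E h expr0n.
apply/matrixP => i j; rewrite mxE.
have hi : \sum_j B i j ^+ 2 = 0.
  move: h2; rewrite /frob2 => /psumr_eq0P; apply => // i' _.
  by apply: sumr_ge0 => j' _; apply: sqr_ge0.
have hj : B i j ^+ 2 = 0.
  by move: hi => /psumr_eq0P; apply => // j' _; apply: sqr_ge0.
by move/eqP: hj; rewrite sqrf_eq0 => /eqP.
Qed.

Lemma lowb n k (c ci : 'rV[R]_n) (P Q Z : 'M[R]_n) (B : 'M[R]_(n, k)) a nu t w :
  0 < a -> 0 < nu -> 0 <= t -> 1 + 4 * nu <= w -> t <= 5 * a / (4 * w) ->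
  (forall i, a ^+ 2 <= c 0 i ^+ 2) -> (forall i, ci 0 i ^+ 2 <= a^-1 ^+ 2) ->
  diag_mx c *m diag_mx ci = 1%:M ->
  Q *m (diag_mx ci *m diag_mx ci) *m P = 1%:M ->
  frob (Z - diag_mx c) <= nu * a -> frob (Z - P) <= t -> frob (Q - diag_mx c) <= nu * a + t ->
  a / (2 * w) * frob B <= frob (Z *m B).
Proof.
move=> a0 nu0 t0 hw ht hc hci hS hQP hZS hZP hQS.
have w0 : 0 < w by lra.
have fB := frob_ge0 B.
case: (lerP nu (3/4)) => hnu.
  have hA := routeA Z B (ltW a0) hc.
  apply: le_trans hA; apply: ler_wpM2r => //.
  rewrite ler_pdivrMr; last by rewrite mulr_gt0.
  have : a * (1 - nu) <= a - frob (Z - diag_mx c) by lra.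
  have h1 : 1 <= (1 - nu) * (2 * w).
    have : (1 - nu) * (2 + 8 * nu) <= (1 - nu) * (2 * w) by apply: ler_wpM2l; lra.
    nra.
  have : a * 1 <= a * ((1 - nu) * (2 * w)) by apply: ler_wpM2l => //; exact: ltW.
  rewrite mulr1 mulrA.
  have : 0 <= 2 * w by lra.
  nra.
have hB := routeB B a0 hci hS hQP hQS hZP.
have hK := Kineq a0 hnu t0 hw ht.
have g0 : 0 < a + (nu * a + t) by nra.
have h0 : (a + (nu * a + t)) * ((a / (2 * w) + t) * frob B) <= (a + (nu * a + t)) * (frob (Z *m B) + t * frob B).
  rewrite mulrA (mulrC (a + _)); apply: le_trans hB; apply: ler_wpM2r => //; by rewrite addrA.
rewrite ler_pM2l // in h0; lra.
Qed.

End Aux.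

Unset Implicit Arguments.
Set Strict Implicit.


Theorem theorem4p5 (R : rcfType) (d1 d2 r : nat) (M : 'M[R]_(d1, d2))
    (U : 'M[R]_(d1, r)) (lam : 'rV[R]_r) (V : 'M[R]_(d2, r)) (nu s : R) :
  \rank M = r ->
  is_compact_svd M U lam V ->
  is_sigma_r lam s ->
  0 < nu ->
  forall (X : 'M[R]_(d1, r)) (Y : 'M[R]_(r, d2)) (d : R),
    is_dist (Xsharp U lam) (Ysharp V lam) X Y d ->
    Num.max (frob (X - Xsharp U lam)) (frob (Y - Ysharp V lam)) <= nu * Num.sqrt s ->
    d <= Num.sqrt s / (1 + 2 * (1 + Num.sqrt 2) * nu) ->
    Num.sqrt s / (2 + 4 * (1 + Num.sqrt 2) * nu) * d <= frob (X *m Y - M).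
Proof.
move=> _ [hU hV hlam hM] [[i0 hi0] hs] nu0 X Y d [hd1 hd2].
rewrite ge_max => /andP [hXX hYY] hd.
set q := 1 + Num.sqrt 2.
have q2 : 2 <= q.
  rewrite /q; have : 1 <= Num.sqrt 2 :> R.
    have : Num.sqrt 1 <= Num.sqrt 2 :> R by apply: ler_wsqrtr; lra.
    by rewrite sqrtr1.
  lra.
set w := 1 + 2 * q * nu.
have hw : 1 + 4 * nu <= w by rewrite /w; nra.
have w0 : 0 < w by lra.
have e2w : 2 + 4 * q * nu = 2 * w by rewrite /w; ring.
rewrite e2w.
have s0 : 0 < s by rewrite -hi0.
set a := Num.sqrt s.
have a0 : 0 < a by rewrite /a sqrtr_gt0.
have as2 : a ^+ 2 = s by rewrite /a sqr_sqrtr // ltW.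
set c := map_mx Num.sqrt lam.
set ci := \row_i (Num.sqrt (lam 0 i))^-1.
set S := diag_mx c.
have eS : sqrt_diag lam = S by [].
have sqpos : forall i, 0 < Num.sqrt (lam 0 i) by move=> i; rewrite sqrtr_gt0.
have hS : S *m diag_mx ci = 1%:M.
  rewrite /S mulmx_diag -diag_const_mx; congr diag_mx; apply/rowP => j.
  by rewrite !mxE mulfV // gt_eqF.
have hS' : diag_mx ci *m S = 1%:M.
  rewrite /S mulmx_diag -diag_const_mx; congr diag_mx; apply/rowP => j.
  by rewrite !mxE mulVf // gt_eqF.
have hSS : S *m S = diag_mx lam.
  rewrite /S mulmx_diag; congr diag_mx; apply/rowP => j.
  by rewrite !mxE -expr2 sqr_sqrtr // ltW.
have hST : S^T = S by rewrite /S tr_diag_mx.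
have hc : forall i, a ^+ 2 <= c 0 i ^+ 2.
  by move=> i; rewrite as2 /c mxE sqr_sqrtr ?hs // ltW.
have hci : forall i, ci 0 i ^+ 2 <= a^-1 ^+ 2.
  move=> i; rewrite /ci mxE !exprVn as2 sqr_sqrtr; last exact: ltW.
  by rewrite lef_pV2 ?hs // posrE.
have eX : Xsharp U lam = U *m S by [].
have eY : Ysharp V lam = S *m V^T by [].
rewrite eX in hXX; rewrite eY in hYY.
rewrite /is_dist eX eY in hd1 hd2.
set del := a / (4 * w).
have del0 : 0 < del by rewrite /del divr_gt0 // mulr_gt0.
have [A0 [hA0 hA0d]] : exists A0 : 'M[R]_r, A0 \in unitmx /\
    dist_term (U *m S) (S *m V^T) X Y A0 <= d + del.
  apply: NNPP => hn.
  have : d + del <= d.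
    apply: hd2 => A hA; apply: ltW; rewrite ltNge; apply/negP => hle.
    by apply: hn; exists A.
  lra.
set t := dist_term (U *m S) (S *m V^T) X Y A0.
have t0 : 0 <= t by exact: sqrtr_ge0.
have ht : t <= 5 * a / (4 * w).
  have : d + del <= 5 * a / (4 * w).
    rewrite /del; have -> : 5 * a / (4 * w) = a / w + a / (4 * w).
      by rewrite invfM; field; rewrite gt_eqF.
    by rewrite lerD2r.
  by apply: le_trans.
have hE : frob (X - U *m S *m A0) <= t.
  by rewrite /t /dist_term /frob ler_wsqrtr // lerDl frob2_ge0.
have hF : frob (Y - invmx A0 *m (S *m V^T)) <= t.
  by rewrite /t /dist_term /frob ler_wsqrtr // lerDr frob2_ge0.
have projU : forall k (Z : 'M[R]_(d1, k)), frob (U^T *m Z) <= frob Z.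
  by move=> k Z; rewrite /frob ler_wsqrtr // frob2_projU.
have projV : forall k (Z : 'M[R]_(k, d2)), frob (Z *m V) <= frob Z.
  by move=> k Z; rewrite /frob ler_wsqrtr // frob2_projV.
set X1 := U^T *m X.
set Y1 := Y *m V.
set P := S *m A0.
set Q := invmx A0 *m S.
have hX1S : frob (X1 - S) <= nu * a.
  have -> : X1 - S = U^T *m (X - U *m S) by rewrite mulmxBr mulmxA hU mul1mx.
  exact: le_trans (projU _ _) hXX.
have hY1S : frob (Y1 - S) <= nu * a.
  have -> : Y1 - S = (Y - S *m V^T) *m V by rewrite mulmxBl -mulmxA hV mulmx1.
  exact: le_trans (projV _ _) hYY.
have hX1P : frob (X1 - P) <= t.
  have -> : X1 - P = U^T *m (X - U *m S *m A0).
    by rewrite mulmxBr !mulmxA hU mul1mx /P.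
  exact: le_trans (projU _ _) hE.
have hY1Q : frob (Y1 - Q) <= t.
  have -> : Y1 - Q = (Y - invmx A0 *m (S *m V^T)) *m V.
    by rewrite mulmxBl -!mulmxA hV mulmx1 /Q.
  exact: le_trans (projV _ _) hF.
have hQS : frob (Q - S) <= nu * a + t.
  have -> : Q - S = (Y1 - S) - (Y1 - Q) by symmetry; rewrite opprB addrC addrA subrK.
  by apply: le_trans (frobB _ _) _; lra.
have hPS : frob (P - S) <= nu * a + t.
  have -> : P - S = (X1 - S) - (X1 - P) by symmetry; rewrite opprB addrC addrA subrK.
  by apply: le_trans (frobB _ _) _; lra.
have hQP : Q *m (diag_mx ci *m diag_mx ci) *m P = 1%:M.
  have -> : Q *m (diag_mx ci *m diag_mx ci) *m P =
     invmx A0 *m ((S *m diag_mx ci) *m (diag_mx ci *m S)) *m A0 by rewrite /Q /P !mulmxA.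
  by rewrite hS hS' !mulmx1 mulVmx.
have hQP' : P^T *m (diag_mx ci *m diag_mx ci) *m Q^T = 1%:M.
  have := congr1 trmx hQP; rewrite !trmx_mul !tr_diag_mx trmx1 !mulmxA => <-.
  done.
set m0 := a / (2 * w).
have m0p : 0 < m0 by rewrite /m0 divr_gt0 // mulr_gt0.
have LX : forall k (B : 'M[R]_(r, k)), m0 * frob B <= frob (X1 *m B).
  by move=> k B; apply: (lowb B a0 nu0 t0 hw ht hc hci hS hQP).
have LY : forall k (B : 'M[R]_(r, k)), m0 * frob B <= frob (Y1^T *m B).
  move=> k B; apply: (lowb B a0 nu0 t0 hw ht hc hci hS hQP').
  - by rewrite -[diag_mx c]hST -linearB frob_trmx.
  - by rewrite -linearB frob_trmx.
  - by rewrite -[diag_mx c]hST -linearB frob_trmx.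
have hX1 : X1 \in unitmx.
  rewrite -row_full_unit -cokermx_eq0; apply/eqP.
  apply: frob_eq0; apply/eqP; rewrite eq_le frob_ge0 andbT.
  have := LX _ (cokermx X1); rewrite mulmx_coker.
  have -> : frob (0 : 'M[R]_r) = 0.
    by rewrite /frob /frob2 big1 ?sqrtr0 // => i _; rewrite big1 // => j _; rewrite mxE expr0n.
  by move=> h; rewrite -(ler_pM2l m0p) mulr0.
set A := diag_mx ci *m X1.
set K := invmx X1 *m S.
have hAK : A *m K = 1%:M.
  by rewrite /A /K mulmxA -(mulmxA _ X1) (mulmxV hX1) mulmx1 hS'.
have hA : A \in unitmx by case: (mulmx1_unit hAK).
have hinvA : invmx A = K by rewrite -(mulKmx hA K) hAK mulmx1.
set X2 := X - U *m X1.
set Y2 := Y - Y1 *m V^T.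
set L := diag_mx lam.
set N := X1 *m Y1 - L.
have hY2V : Y2 *m V = 0 by rewrite /Y2 mulmxBl -mulmxA hV mulmx1 subrr.
have hUX2 : U^T *m X2 = 0 by rewrite /X2 mulmxBr mulmxA hU mul1mx subrr.
have e1 : X - U *m S *m A = X2 by rewrite /A /X2 -!mulmxA (mulmxA S) hS mul1mx.
have e2 : Y - invmx A *m (S *m V^T) = (invmx X1 *m N) *m V^T + Y2.
  rewrite hinvA /K /N /Y2 mulmxBr (mulKmx hX1) mulmxBl.
  rewrite [RHS]addrC [RHS]addrA subrK; congr (_ - _).
  by rewrite -!mulmxA (mulmxA S) hSS.
have hdA : dist_term (U *m S) (S *m V^T) X Y A ^+ 2 =
    frob2 X2 + (frob2 (invmx X1 *m N) + frob2 Y2).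
  rewrite /dist_term sqr_sqrtr; last by rewrite addr_ge0 // frob2_ge0.
  rewrite e1 e2 (@frob2_orth _ _ _ (invmx X1 *m N *m V^T) Y2) ?frob2_mulVt //.
  by rewrite -!mulmxA -trmx_mul hY2V trmx0 !mulmx0.
set W := X *m Y - M.
have hW0 : U^T *m W = X1 *m Y - L *m V^T.
  by rewrite /W hM mulmxBr !mulmxA hU mul1mx.
have hW1 : U^T *m W = N *m V^T + X1 *m Y2.
  rewrite hW0 /N /Y2 mulmxBl mulmxBr !mulmxA.
  by rewrite [RHS]addrC [RHS]addrA subrK.
have hW2 : W - U *m (U^T *m W) = X2 *m Y.
  rewrite hW0 mulmxBr !mulmxA -/L -hM /W /X2 mulmxBl.
  by rewrite opprB addrA subrK /X1 !mulmxA.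
have hWdec : frob2 W = frob2 (U^T *m W) + frob2 (X2 *m Y).
  have eW : W = U *m (U^T *m W) + (W - U *m (U^T *m W)) by rewrite addrC subrK.
  rewrite {1}eW (@frob2_orthT _ _ _ (U *m (U^T *m W)) (W - U *m (U^T *m W))).
    by rewrite hW2 (frob2_mulU (U^T *m W) hU).
  rewrite trmx_mul mulmxBr -!mulmxA (mulmxA U^T U) hU mul1mx.
  by rewrite trmx_mul mulmxA -mulmxA subrr.
have hW1' : frob2 (U^T *m W) = frob2 N + frob2 (X1 *m Y2).
  rewrite hW1 frob2_orth ?frob2_mulVt //.
  by rewrite trmx_mul -!mulmxA (mulmxA V^T) -trmx_mul hY2V trmx0 mul0mx mulmx0.
have hX2Y : frob2 (X2 *m Y1) <= frob2 (X2 *m Y).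
  have -> : X2 *m Y = X2 *m Y1 *m V^T + X2 *m Y2.
    by rewrite /Y2 mulmxBr !mulmxA addrC subrK.
  rewrite frob2_orth ?frob2_mulVt //.
    by rewrite -[X in X <= _]addr0 lerD2l frob2_ge0.
  by rewrite trmx_mul -!mulmxA [V^T *m _]mulmxA -trmx_mul hY2V trmx0 mul0mx !mulmx0.
have sq : forall x y : R, 0 <= x -> x <= y -> x ^+ 2 <= y ^+ 2.
  by move=> x y x0 xy; nra.
have m00 : 0 <= m0 by exact: ltW.
have b1 : (m0 * frob X2) ^+ 2 <= frob2 (X2 *m Y1).
  rewrite frob2E; apply: sq; first by rewrite mulr_ge0 // frob_ge0.
  by rewrite -frob_trmx -(frob_trmx (X2 *m Y1)) trmx_mul LY.
have b2 : (m0 * frob (invmx X1 *m N)) ^+ 2 <= frob2 N.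
  rewrite frob2E; apply: sq; first by rewrite mulr_ge0 // frob_ge0.
  by have := LX _ (invmx X1 *m N); rewrite mulKVmx.
have b3 : (m0 * frob Y2) ^+ 2 <= frob2 (X1 *m Y2).
  rewrite frob2E; apply: sq; first by rewrite mulr_ge0 // frob_ge0.
  exact: LX.
have hfin : (m0 * dist_term (U *m S) (S *m V^T) X Y A) ^+ 2 <= frob W ^+ 2.
  rewrite exprMn hdA -frob2E hWdec hW1' !frob2E !mulrDr -!exprMn.
  rewrite !frob2E in b1 b2 b3 hX2Y.
  lra.
have hfin' : m0 * dist_term (U *m S) (S *m V^T) X Y A <= frob W.
  have := frob_ge0 W; have : 0 <= m0 * dist_term (U *m S) (S *m V^T) X Y A.
    by rewrite mulr_ge0 // sqrtr_ge0.
  nra.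
apply: le_trans hfin'; apply: ler_wpM2l => //; exact: hd1.
Qed.
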